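(* Let $\mathcal I\neq\mathrm{Fin}$ be an ideal on $\mathbb N$ for which there exists an infinite set $E\subset\mathbb N$ such that: (I) no infinite subset of $E$ belongs to $\mathcal I$; (II) $\sup\{e_{n+1}-e_n\colon n\in\mathbb N\}<\infty$, where $(e_n)_{n\in\mathbb N}$ is the increasing enumeration of $E$. Then for each normed space $X$ and every divergent series $\sum_n x_n$ in $X$ which is $\mathcal I$-convergent, the set $$A(\mathcal I):=\left\{t \in \{0,1\}^{\mathbb N} \colon \sum_n t(n)x_n \text{ is } \mathcal I\text{-convergent}\right\}$$ satisfies $\lambda(A(\mathcal I))=0$.
   Context: $\mathbb N=\{1,2,\dots\}$; $\mathrm{Fin}$ denotes the ideal of finite subsets of $\mathbb N$. An ideal on $\mathbb N$ is a family $\mathcal I\subset\mathcal P(\mathbb N)$ closed under finite unions and subsets, with $\mathbb N\notin\mathcal I$ and $\mathrm{Fin}\subset\mathcal I$. A sequence $(y_n)$ in a normed space is $\mathcal I$-convergent to $y$ if $\{n:\|y_n-y\|>\varepsilon\}\in\mathcal I$ for every $\varepsilon>0$; a series is $\mathcal I$-convergent if its sequence of partial sums is $\mathcal I$-convergent to some element. $\lambda$ is the product probability measure on $\{0,1\}^{\mathbb N}$ generated by the measure giving mass $1/2$ to each of $0$ and $1$. Normed spaces are over $\mathbb R$. *)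

(* Defs.v *)
From HB Require Import structures.
From mathcomp Require Import all_boot all_order all_algebra.
From mathcomp Require Import all_classical all_reals all_analysis.
Set Implicit Arguments. Unset Strict Implicit. Unset Printing Implicit Defensive.
Import Order.TTheory GRing.Theory Num.Theory.
Import numFieldNormedType.Exports.
Local Open Scope classical_set_scope.
Local Open Scope ring_scope.

(* Indices: the paper's N = {1,2,...} is relabelled as nat = {0,1,...}
   via n |-> n-1. *)

Definition is_ideal (I : set (set nat)) : Prop :=
  [/\ (forall A B, I A -> I B -> I (A `|` B)),
      (forall A B, B `<=` A -> I A -> I B),
      ~ I setT &
      (forall A, finite_set A -> I A)].

(* I is different from Fin (given Fin ⊆ I): some member of I is infinite. *)
Definition ideal_neq_Fin (I : set (set nat)) : Prop :=
  I <> [set A | finite_set A].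

Definition Icvg (R : realType) (X : normedModType R) (I : set (set nat))
    (y : nat -> X) (l : X) : Prop :=
  forall eps : R, 0 < eps -> I [set n | eps < `|y n - l|].

(* Partial sums S_n = x_0 + ... + x_n (paper: x_1 + ... + x_n). *)
Definition psum (R : realType) (X : normedModType R) (x : nat -> X) : nat -> X :=
  fun n => \sum_(0 <= k < n.+1) x k.

Definition Icvg_series (R : realType) (X : normedModType R) (I : set (set nat))
    (x : nat -> X) : Prop :=
  exists l : X, Icvg I (psum x) l.

Definition series_converges (R : realType) (X : normedModType R) (x : nat -> X) : Prop :=
  exists l : X, psum x @ \oo --> l.

Definition A_set (R : realType) (X : normedModType R) (I : set (set nat))
    (x : nat -> X) : set (nat -> bool) :=
  [set t | Icvg_series I (fun n => ((t n)%:R : R) *: x n)].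

Definition cylinder (s : seq bool) : set cantor_space :=
  [set t | forall i, (i < size s)%N -> t i = nth false s i].

Definition cylinders : set (set cantor_space) := range cylinder.

Definition Cantor := g_sigma_algebraType cylinders.

(* mu is the product of the fair coin measures: mu(cylinder s) = 2^-|s|.
   Such a measure exists and is unique (it is lambda). *)
Definition is_coin_product (R : realType)
    (mu : {measure set Cantor -> \bar R}) : Prop :=
  forall s : seq bool, mu (cylinder s) = ((2%:R : R) ^- size s)%:E.

(* Main.v *)
Require Import Defs.
From HB Require Import structures.
From mathcomp Require Import all_boot all_order all_algebra.
From mathcomp Require Import all_classical all_reals all_analysis.
From mathcomp Require Import ring lra zify.
Import Order.TTheory GRing.Theory Num.Theory.
Import numFieldNormedType.Exports.
Local Open Scope classical_set_scope.
Local Open Scope ring_scope.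

Section Avg.
Variable R : realType.

Fixpoint avg (L : nat) (F : seq bool -> R) : R :=
  match L with
  | 0 => F [::]
  | L'.+1 => (avg L' (fun w => F (false :: w)) + avg L' (fun w => F (true :: w))) / 2
  end.

Lemma avg_cat a K F :
  avg (a + K) F = avg a (fun u => avg K (fun v => F (u ++ v))).
Proof.
elim: a F => [|a IH] F //=.
by rewrite !IH.
Qed.

Lemma avg_le L F G : (forall u, size u = L -> F u <= G u) -> avg L F <= avg L G.
Proof.
elim: L F G => [|L IH] F G H /=; first by apply: H.
rewrite ler_pM2r ?invr_gt0 ?ltr0n //.
by apply: lerD; apply: IH => u su; apply: H; rewrite /= su.
Qed.

Lemma avg_ext L F G : (forall u, size u = L -> F u = G u) -> avg L F = avg L G.
Proof.
move=> H; apply/le_anti; rewrite !avg_le // => u su; by rewrite H.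
Qed.

Lemma avg_const L c : avg L (fun _ => c) = c.
Proof.
elim: L c => [|L IH] c //=; rewrite !IH; by field.
Qed.

Lemma avg_scale L c F : avg L (fun u => c * F u) = c * avg L F.
Proof.
elim: L F => [|L IH] F //=; rewrite !IH; by field.
Qed.

Lemma avg_add L F G : avg L (fun u => F u + G u) = avg L F + avg L G.
Proof.
elim: L F G => [|L IH] F G //=; rewrite !IH; by field.
Qed.

Fixpoint pref (w u : seq bool) : bool :=
  match w, u with
  | [::], _ => true
  | b :: w', b' :: u' => (b' == b) && pref w' u'
  | _ :: _, [::] => false
  end.

Lemma avg_pref w D : (size w <= D)%N ->
  avg D (fun v => (pref w v)%:R) = ((2:R) ^+ size w)^-1.
Proof.
elim: w D => [|b w IH] D H.
  by rewrite (@avg_ext _ _ (fun _ => 1)) ?avg_const ?expr0 ?invr1 //; case.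
case: D H => [//|D] H /=.
rewrite (@avg_ext _ _ (fun v => (b == false)%:R * (pref w v)%:R)); last first.
  by move=> u _; case: (b); rewrite /= ?mul1r ?mul0r.
rewrite (@avg_ext D (fun v => ((true == b) && pref w v)%:R)
   (fun v => (b == true)%:R * (pref w v)%:R)); last first.
  by move=> u _; case: (b); rewrite /= ?mul1r ?mul0r.
rewrite !avg_scale IH // exprS invfM.
by case: (b) => /=; rewrite ?mul1r ?mul0r ?add0r ?addr0 mulrC.
Qed.

End Avg.
Section Link.
Variable R : realType.
Variable mu : {measure set Cantor -> \bar R}.
Hypothesis hmu : is_coin_product mu.

Lemma cyl_meas s : measurable (cylinder s : set Cantor).
Proof. by apply: sub_sigma_algebra; exists s. Qed.

Lemma cyl_mkseq s (t : Cantor) : cylinder s t -> mkseq t (size s) = s.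
Proof.
move=> ht; apply: (@eq_from_nth _ false); rewrite ?size_mkseq // => i hi.
by rewrite nth_mkseq // ht.
Qed.

Lemma cyl_rcons s b (t : Cantor) :
  cylinder (rcons s b) t <-> cylinder s t /\ t (size s) = b.
Proof.
split.
- move=> h; split.
    move=> i hi; rewrite h ?size_rcons ?nth_rcons ?hi //.
    by apply: ltnW.
  by rewrite h ?size_rcons // nth_rcons ltnn eqxx.
- move=> [h1 h2] i; rewrite size_rcons ltnS leq_eqVlt nth_rcons.
  case/orP => [/eqP ->|hi]; first by rewrite ltnn eqxx.
  by rewrite hi h1.
Qed.

Lemma link L : forall s (P : seq bool -> bool),
  measurable ([set t : Cantor | P (mkseq t (size s + L))] `&` cylinder s) /\
  mu ([set t : Cantor | P (mkseq t (size s + L))] `&` cylinder s) =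
  (((2:R) ^+ size s)^-1 * @avg R L (fun w => (P (s ++ w))%:R))%:E.
Proof.
elim: L => [|L IH] s P.
  have -> : [set t : Cantor | P (mkseq t (size s + 0))] `&` cylinder s =
            if P s then cylinder s else set0.
    apply/seteqP; split => t /=.
      by move=> [hP hc]; move: hP; rewrite addn0 cyl_mkseq // => ->.
    case hPs: (P s) => //= hc; split => //.
    by rewrite addn0 cyl_mkseq.
  rewrite /= cats0; case: (P s); split.
  - exact: cyl_meas.
  - by rewrite hmu mulr1.
  - exact: measurable0.
  - by rewrite measure0 mulr0.
have -> : [set t : Cantor | P (mkseq t (size s + L.+1))] `&` cylinder s =
   ([set t : Cantor | P (mkseq t (size (rcons s false) + L))] `&` cylinder (rcons s false))
   `|` ([set t : Cantor | P (mkseq t (size (rcons s true) + L))] `&` cylinder (rcons s true)).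
  rewrite !size_rcons !addSn !addnS; apply/seteqP; split => t.
    move=> [hP hc]; case ht: (t (size s)).
      by right; split => //; apply: (proj2 (cyl_rcons s true t)).
    by left; split => //; apply: (proj2 (cyl_rcons s false t)).
  by move=> [] [hP /(proj1 (cyl_rcons _ _ _)) [hc _]].
have [m1 e1] := IH (rcons s false) P.
have [m2 e2] := IH (rcons s true) P.
split; first exact: measurableU.
rewrite (measureU _ m1 m2); last first.
  apply/seteqP; split => t // [] [_ /(proj1 (cyl_rcons _ _ _)) [_ h1]] [_ /(proj1 (cyl_rcons _ _ _)) [_ h2]].
  by rewrite h1 in h2.
apply: eq_trans (congr2 (fun a b => (a + b)%E) e1 e2) _.
rewrite -EFinD /=; congr (_%:E).
rewrite !size_rcons exprS invfM.
rewrite (@avg_ext R L (fun w => (P (rcons s false ++ w))%:R) (fun w => (P (s ++ false :: w))%:R)); last first.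
  by move=> u _; rewrite cat_rcons.
rewrite (@avg_ext R L (fun w => (P (rcons s true ++ w))%:R) (fun w => (P (s ++ true :: w))%:R)); last first.
  by move=> u _; rewrite cat_rcons.
field; by rewrite expf_neq0 // pnatr_eq0.
Qed.
End Link.
Lemma pref_nth w s : pref w s -> forall j, (j < size w)%N -> nth false s j = nth false w j.
Proof.
elim: w s => [|b w IH] [|b' s] //= /andP[/eqP -> hp] [|j] //= hj.
exact: IH.
Qed.

Lemma pref_cat w s1 s2 : (size w <= size s1)%N -> pref w (s1 ++ s2) = pref w s1.
Proof.
elim: w s1 => [|b w IH] [|b' s1] //= h.
by rewrite IH.
Qed.

Lemma pref_drop_cat w k s1 s2 : (k + size w <= size s1)%N ->
  pref w (drop k (s1 ++ s2)) = pref w (drop k s1).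
Proof.
move=> h; rewrite drop_cat.
case: ltnP => hk.
  by rewrite pref_cat // size_drop leq_subRL // ltnW.
have e : size w = 0%N by lia.
by case: w e h.
Qed.

Lemma q_small (R : realType) (q : R) : 0 <= q < 1 -> forall e : R, 0 < e -> exists n, q ^+ n < e.
Proof.
move=> /andP[q0 q1] e e0.
have hq : `|q| < 1 by rewrite ger0_norm.
have /cvgrPdist_lt /(_ e e0) := cvg_expr hq.
move=> [N _ HN]; exists N; have := HN N (leqnn N).
by rewrite sub0r normrN ger0_norm //; exact: exprn_ge0.
Qed.

Section Main.
Variable R : realType.
Variable mu : {measure set Cantor -> \bar R}.
Hypothesis hmu : is_coin_product mu.
Variables (a : nat -> nat) (w : nat -> seq bool) (M : nat).
Hypothesis ha : forall i, (a i + size (w i) <= a i.+1)%N.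
Hypothesis hw : forall i, (size (w i) <= M)%N.

Lemma a_le i k : (i < k)%N -> (a i + size (w i) <= a k)%N.
Proof.
elim: k => [//|k IH]; rewrite ltnS leq_eqVlt => /orP [/eqP -> //|hik].
apply: leq_trans (IH hik) _.
by apply: leq_trans (ha k); apply: leq_addr.
Qed.

Definition Pn N n (u : seq bool) : bool :=
  all (fun i => ~~ pref (w i) (drop (a i) u)) (iota N n).

Definition G N n : set Cantor := [set t : Cantor | Pn N n (mkseq t (a (N + n)))].

Lemma G_meas_mu N n : measurable (G N n) /\
  mu (G N n) = (@avg R (a (N + n)) (fun u => (Pn N n u)%:R))%:E.
Proof.
have [m e] := @link R mu hmu (a (N + n)) [::] (Pn N n).
have EG : G N n = [set t : Cantor | Pn N n (mkseq t (size ([::] : seq bool) + a (N + n)))] `&` cylinder [::].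
  rewrite /G; apply/seteqP; split => t /=; first by move=> h; split. 
  by case.
rewrite EG; split => //; rewrite e /= expr0 invr1 mul1r //.
Qed.

Let q : R := 1 - ((2:R) ^+ M)^-1.

Lemma inv2M : 0 < ((2:R)^+M)^-1 <= 1.
Proof.
rewrite invr_gt0 exprn_gt0 ?ltr0n //= invf_le1 ?exprn_gt0 ?ltr0n //.
by rewrite exprn_ege1 // ler1n.
Qed.

Lemma q_range : 0 <= q < 1.
Proof.
have /andP[h1 h2] := inv2M.
by rewrite /q subr_ge0 h2 /= ltrBlDr ltrDl.
Qed.

Lemma avg_bound N n : @avg R (a (N + n)) (fun u => (Pn N n u)%:R) <= q ^+ n.
Proof.
elim: n => [|n IH].
  rewrite expr0 (@avg_ext R _ _ (fun _ => 1)) ?avg_const //.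
set D := (a (N + n).+1 - a (N + n))%N.
have hD : a (N + n.+1) = (a (N + n) + D)%N.
  by rewrite addnS /D subnKC // (leq_trans _ (ha _)) // leq_addr.
rewrite hD avg_cat.
apply: (@le_trans _ _ (@avg R (a (N + n)) (fun u => (Pn N n u)%:R * q))).
  apply: avg_le => u su.
  rewrite (@avg_ext R D _ (fun v => (Pn N n u)%:R * (1 - (pref (w (N + n)) v)%:R))); last first.
    move=> v _.
    rewrite /Pn -addn1 iotaD all_cat /= andbT.
    rewrite (drop_size_cat _ su).
    rewrite (@eq_in_all _ _ (fun i => ~~ pref (w i) (drop (a i) u))); last first.
      move=> i; rewrite mem_iota => /andP[h1 h2].
      rewrite pref_drop_cat // su; apply: a_le; lia.
    by case: (all _ _); case: (pref _ _); rewrite /= ?mul0r ?mul1r ?subrr ?subr0.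
  rewrite avg_scale avg_add avg_const.
  rewrite (@avg_ext R D _ (fun v => - 1 * (pref (w (N + n)) v)%:R)); last first.
    by move=> v _; rewrite mulN1r.
  rewrite avg_scale avg_pref; last first.
    have := ha (N + n); rewrite /D; lia.
  rewrite mulN1r ler_wpM2l // ?ler0n // lerD2l lerN2.
  rewrite lef_pV2 ?posrE ?exprn_gt0 ?ltr0n //.
  by rewrite (ler_eXn2l (_ : 1 < (2:R))) ?ltr1n.
rewrite exprSr.
rewrite (@avg_ext R _ _ (fun u => q * (Pn N n u)%:R)); last by move=> u _; rewrite mulrC.
rewrite avg_scale mulrC ler_wpM2r //.
by case/andP: q_range.
Qed.

Definition C N : set Cantor := \bigcap_n G N n.

Lemma C_null N : mu.-negligible (C N).
Proof.
have mC : measurable (C N).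
  by apply: bigcapT_measurable => n; have [] := G_meas_mu N n.
apply/negligibleP => //.
apply/le_anti; rewrite measure_ge0 andbT.
apply/lee_addgt0Pr => e e0; rewrite add0e.
have [n hn] := @q_small R q q_range e e0.
apply: (@le_trans _ _ (mu (G N n))).
  apply: le_measure; rewrite ?inE //; first by have [] := G_meas_mu N n.
  by move=> t Ct; apply: Ct.
have [_ ->] := G_meas_mu N n.
rewrite lee_fin; apply: le_trans (avg_bound N n) (ltW hn).
Qed.

Lemma main_measure :
  mu.-negligible [set t : Cantor | exists N, forall i, (N <= i)%N ->
     ~ (forall j, (j < size (w i))%N -> t (a i + j) = nth false (w i) j)].
Proof.
apply: (@negligibleS _ _ _ mu (\bigcup_N C N)); last first.
  by apply: negligible_bigcup => N; apply: C_null.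
move=> t [N HN]; exists N => // n _.
rewrite /G /= /Pn; apply/allP => i; rewrite mem_iota => /andP[h1 h2].
apply/negP => hp; apply: (HN i h1) => j hj.
have := @pref_nth _ _ hp j hj.
have hle := a_le _ _ h2.
rewrite nth_drop nth_mkseq //; lia.
Qed.
End Main.
Lemma near_E (I : set (set nat)) (hI : is_ideal I) (E : set nat)
  (hEI : forall F, F `<=` E -> ~ finite_set F -> ~ I F)
  (R : realType) (X : normedModType R) (y : nat -> X) (L : X) :
  Icvg I y L -> forall eps : R, 0 < eps ->
  exists B, forall n, E n -> (B <= n)%N -> `|y n - L| <= eps.
Proof.
move=> hc eps he.
case: hI => _ hsub _ _.
pose F := E `&` [set n | eps < `|y n - L|].
have IF : I F by apply: hsub (hc eps he) => n [].
have fF : finite_set F.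
  apply: contrapT => nf; exact: (hEI F (@subIsetl _ _ _) nf IF).
have [s Fs] := (proj1 (finite_seqP F)) fF.
exists (\max_(i <- s) i).+1 => n En hn.
rewrite leNgt; apply/negP => hlt.
have : F n by split.
rewrite Fs /= => ins.
have := @leq_bigmax_seq _ s xpredT (fun i => i) n ins isT.
by rewrite leqNgt hn.
Qed.

Lemma bracket (E : set nat) (M : nat)
  (hM : forall m, E m -> exists m', [/\ E m', (m < m')%N & (m' <= m + M)%N])
  e0 : E e0 -> forall n, (e0 <= n)%N ->
  exists e e', [/\ E e, E e', (e <= n < e')%N & (e' <= e + M)%N].
Proof.
move=> E0; elim => [|n IH] hn.
  have e00 : e0 = 0%N by lia.
  subst e0; have [m' [h1 h2 h3]] := hM 0%N E0.
  by exists 0%N, m'; split.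
case: (leqP e0 n) => h.
  have [e [e' [h1 h2 /andP[h3 h4] h5]]] := IH h.
  case: (ltnP n.+1 e') => h6.
    by exists e, e'; split => //; apply/andP; split => //; lia.
  have ee : e' = n.+1 by lia.
  subst e'; have [m' [k1 k2 k3]] := hM _ h2.
  by exists n.+1, m'; split => //; apply/andP.
have ee : e0 = n.+1 by lia.
subst e0; have [m' [k1 k2 k3]] := hM _ E0.
by exists n.+1, m'; split => //; apply/andP.
Qed.

Lemma psum_diff (R : realType) (X : normedModType R) (z : nat -> X) p q :
  (p <= q)%N -> psum z q - psum z p = \sum_(p.+1 <= k < q.+1) z k.
Proof.
move=> h; rewrite /psum (@big_cat_nat _ _ _ p.+1 0 q.+1) //=.
by rewrite addrC addrK.
Qed.
Lemma pat_val (t : nat -> bool) e n e' :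
  (e <= n <= e')%N ->
  (forall j, (j < size (nseq (n - e) true ++ nseq (e' - n) false))%N ->
     t (e.+1 + j) = nth false (nseq (n - e) true ++ nseq (e' - n) false) j) ->
  forall k, (e < k <= e')%N -> t k = (k <= n)%N.
Proof.
move=> /andP[h1 h2] hp k /andP[k1 k2].
have hk : k = (e.+1 + (k - e.+1))%N by lia.
rewrite hk hp; last by rewrite size_cat !size_nseq; lia.
rewrite nth_cat size_nseq.
case: ltnP => hj.
  rewrite nth_nseq hj; symmetry; apply/idP; lia.
rewrite nth_nseq; case: ifP => _ //; symmetry; apply/negP; lia.
Qed.

Lemma sum_pat (R : realType) (X : normedModType R) (x : nat -> X) (t : nat -> bool) e n e' :
  (e <= n <= e')%N -> (forall k, (e < k <= e')%N -> t k = (k <= n)%N) ->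
  psum (fun k => ((t k)%:R : R) *: x k) e' - psum (fun k => ((t k)%:R : R) *: x k) e =
  psum x n - psum x e.
Proof.
move=> /andP[h1 h2] ht.
rewrite !psum_diff ?(leq_trans h1 h2) //.
rewrite (@big_cat_nat _ _ _ n.+1) //=.
rewrite (@eq_big_nat _ _ _ n.+1 e'.+1 _ (fun _ => 0)); last first.
  by move=> k /andP[k1 k2]; rewrite ht; [rewrite leqNgt k1 /= scale0r | lia].
rewrite big1_eq addr0; apply: eq_big_nat => k /andP[k1 k2].
by rewrite ht; [rewrite -ltnS k2 scale1r | lia].
Qed.
Theorem theorem4p5 (I : set (set nat)) (hI : is_ideal I) (hIF : ideal_neq_Fin I)
  (hE : exists E : set nat,
      [/\ ~ finite_set E,
          (forall F, F `<=` E -> ~ finite_set F -> ~ I F) &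
          (exists M : nat, forall m, E m ->
              exists m', [/\ E m', (m < m')%N & (m' <= m + M)%N])])
  (R : realType) (X : normedModType R) (x : nat -> X)
  (hdiv : ~ series_converges x) (hIc : Icvg_series I x)
  (mu : {measure set Cantor -> \bar R}) (hmu : is_coin_product mu) :
  mu.-negligible (A_set I x : set Cantor).
Proof.
have [E [Einf hEI [M hM]]] := hE.
have [e0 E0] : E !=set0 := infinite_setN0 Einf.
have [l hl] := hIc.
have [eps [he hdv]] : exists eps : R, 0 < eps /\
    forall N, exists n, (N <= n)%N /\ eps <= `|l - psum x n|.
  apply: contrapT => hn; apply: hdiv; exists l.
  apply/cvgrPdist_lt => eps he.
  apply: contrapT => hne; apply: hn; exists eps; split => // N.
  apply: contrapT => hN; apply: hne; exists N => // n /= hn'.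
  rewrite ltNge; apply/negP => hle; apply: hN; exists n; split => //.
have he2 : 0 < eps / 2 by rewrite divr_gt0.
have he8 : 0 < eps / 8 by rewrite divr_gt0.
have [B0 hB0] := @near_E I hI E hEI R X _ _ hl _ he2.
have H : forall N, exists tr : nat * nat * nat,
    [/\ (N <= tr.1.1)%N, (tr.1.1 < tr.1.2 < tr.2)%N, E tr.1.1 /\ E tr.2,
        (tr.2 <= tr.1.1 + M)%N & eps / 4 < `|psum x tr.1.2 - psum x tr.1.1|].
  move=> N.
  have [n [hn1 hn2]] := hdv (N + B0 + e0 + M)%N.
  have hn0 : (e0 <= n)%N by lia.
  have [e [e' [Ee Ee' /andP[k1 k2] k3]]] := @bracket E M hM e0 E0 n hn0.
  have eB0 : (B0 <= e)%N by lia.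
  have hSe := hB0 e Ee eB0.
  have hen : e != n.
    apply/eqP => een; subst e.
    move: hn2; rewrite distrC => hn2.
    have : eps <= eps / 2 by apply: le_trans hn2 hSe.
    move=> h; lra.
  exists (e, n, e'); split => //=.
  - lia.
  - by apply/andP; split => //; rewrite ltn_neqAle hen.
  - have : eps <= `|l - psum x e| + `|psum x e - psum x n|.
      apply: le_trans hn2 _.
      by have := ler_normD (l - psum x e) (psum x e - psum x n); rewrite addrA subrK.
    rewrite distrC in hSe; rewrite [X in _ < X]distrC.
    move: hSe; set u := `|l - psum x e|; set v := `|psum x e - psum x n|.
    move=> h1 h2; lra.
pose g N := sval (cid (H N)).
have hg N := svalP (cid (H N)).
pose T := fix T i := match i with 0 => g 0%N | i'.+1 => g ((T i').2).+1 end.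
have hT : forall i, let tr := T i in
    [/\ (tr.1.1 < tr.1.2 < tr.2)%N, E tr.1.1 /\ E tr.2,
        (tr.2 <= tr.1.1 + M)%N & eps / 4 < `|psum x tr.1.2 - psum x tr.1.1|].
  by case => [|i] /=; [have [] := hg 0%N | have [] := hg ((T i).2).+1].
have hTs : forall i, ((T i).2 < (T i.+1).1.1)%N.
  by move=> i /=; have [] := hg ((T i).2).+1.
have hTi : forall i, (i <= (T i).1.1)%N.
  elim => [|i IH] //; have := hTs i; have [/andP[u1 u2] _ _ _] := hT i; lia.
pose a i := ((T i).1.1).+1.
pose w i := nseq ((T i).1.2 - (T i).1.1) true ++ nseq ((T i).2 - (T i).1.2) false.
have ha : forall i, (a i + size (w i) <= a i.+1)%N.
  move=> i; rewrite /a /w size_cat !size_nseq.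
  have := hTs i; have [/andP[u1 u2] _ _ _] := hT i; lia.
have hw : forall i, (size (w i) <= M)%N.
  move=> i; rewrite /w size_cat !size_nseq.
  have [/andP[u1 u2] _ u3 _] := hT i; lia.
apply: (negligibleS _ (@main_measure R mu hmu a w M ha hw)).
move=> t [Lt hLt].
have [B1 hB1] := @near_E I hI E hEI R X _ _ hLt _ he8.
exists B1 => i hi hp.
have [/andP[u1 u2] [Ee Ee'] u3 u4] := hT i.
have hle : ((T i).1.1 <= (T i).1.2 <= (T i).2)%N.
  by apply/andP; split; apply: ltnW.
have hv := @pat_val t _ _ _ hle hp.
have hs := @sum_pat R X x t _ _ _ hle hv.
have hiT := hTi i.
have h1 := hB1 _ Ee (leq_trans hi hiT).
have h2 := hB1 _ Ee' (leq_trans hi (leq_trans hiT (ltnW (leq_trans u1 (ltnW u2))))).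
move: u4; rewrite -hs.
set y := psum _.
have : `|y (T i).2 - y (T i).1.1| <= `|y (T i).2 - Lt| + `|y (T i).1.1 - Lt|.
  by have := ler_normD (y (T i).2 - Lt) (Lt - y (T i).1.1); rewrite addrA subrK distrC (distrC Lt).
move: h1 h2; rewrite -/y.
set p1 := `|y (T i).1.1 - Lt|; set p2 := `|y (T i).2 - Lt|; set p3 := `|_ - _|.
move=> h1 h2 h3 h4; lra.
Qed.
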